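(* Let $|\cdot|$ be a norm on $\mathbb{R}^d$ with constants $c_1,c_2\in(0,\infty)$ such that $c_1\|x\|\le|x|\le c_2\|x\|$ for all $x$. Let $k\in\mathbb{N}$, $\eta\colon\mathbb{R}^d\to\mathbb{R}^k$, $\mu\in\mathbb{R}^k$, $A\colon\mathbb{R}^d\to\mathbb{R}$, and let $\rho\colon\mathbb{R}^d\to(0,\infty)$ be proportional to $x\mapsto\exp(\eta(x)^T\mu-A(x))$. Assume there exist an increasing function $\varphi\colon[0,\infty)\to\mathbb{R}$ and a point $x_0\in\mathbb{R}^d$ with $\eta(x)^T\mu-A(x)=-\varphi(|x-x_0|)$ for all $x\in\mathbb{R}^d$ (equivalently, $\rho$ is proportional to $x\mapsto\exp(-\varphi(|x-x_0|))$). Then: (i) $\rho$ is bounded away from $0$ and from $\infty$ on every compact subset of $\mathbb{R}^d$; (ii) with $R=4\tfrac{c_2}{c_1}\|x_0\|$ and $\alpha=\tfrac{c_1}{2c_2}$, one has $B_{\alpha\|x\|}(0)\subseteq G_{\rho(x)}$ for all $x$ with $\|x\|>R$.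
   Context: $\|\cdot\|$ is the Euclidean norm, $B_r(y)=\{z\in\mathbb{R}^d:\|z-y\|\le r\}$, and $G_t=\{y\in\mathbb{R}^d:\rho(y)\ge t\}$ for $t\ge0$. *)

(* Defs.v *)
From HB Require Import structures.
From mathcomp Require Import all_boot all_order all_algebra.
From mathcomp Require Import all_classical all_reals all_analysis.
Set Implicit Arguments. Unset Strict Implicit. Unset Printing Implicit Defensive.
Import Order.TTheory GRing.Theory Num.Theory.
Import numFieldNormedType.Exports.
Local Open Scope classical_set_scope.
Local Open Scope ring_scope.

Definition enorm (R : realType) (d : nat) (x : 'rV[R]_d) : R :=
  Num.sqrt (\sum_(i < d) (x ord0 i) ^+ 2).

Definition dotp (R : realType) (k : nat) (u v : 'rV[R]_k) : R :=
  \sum_(i < k) u ord0 i * v ord0 i.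

Definition eball (R : realType) (d : nat) (r : R) (y : 'rV[R]_d) : set 'rV[R]_d :=
  [set z | enorm (z - y) <= r].

Definition superlevel (R : realType) (d : nat) (rho : 'rV[R]_d -> R) (t : R)
  : set 'rV[R]_d := [set y | t <= rho y].

Definition is_norm (R : realType) (d : nat) (N : 'rV[R]_d -> R) : Prop :=
  [/\ forall x y, N (x + y) <= N x + N y,
      forall (a : R) x, N (a *: x) = `|a| * N x
    & forall x, N x = 0 -> x = 0].

(* Main.v *)
Require Import Defs.
From HB Require Import structures.
From mathcomp Require Import all_boot all_order all_algebra.
From mathcomp Require Import all_classical all_reals all_analysis.
Import Order.TTheory GRing.Theory Num.Theory.
From mathcomp Require Import ring lra.
Import numFieldNormedType.Exports.
Local Open Scope classical_set_scope.
Local Open Scope ring_scope.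

Lemma bnd_cpt (R : realType) d (K : set 'rV[R]_d) : compact K -> exists M : R, 0 <= M /\ forall x, K x -> forall i, `|x ord0 i| <= M.
Proof.
move=> /compact_bounded [M0 [M0r HM]].
have /HM HK : M0 < `|M0| + 1 by rewrite ltr_pwDr // real_ler_norm.
exists (`|M0| + 1); split; first by rewrite addr_ge0.
move=> x /HK Hx i; apply: le_trans Hx.
rewrite [X in _ <= X]mx_normrE.
apply: (le_trans _ (le_bigmax _ _ (ord0, i))) => //.
Qed.

Theorem corollary1 (R : realType) (d k : nat) (N : 'rV[R]_d -> R) (c1 c2 : R)
  (eta : 'rV[R]_d -> 'rV[R]_k) (mu : 'rV[R]_k) (A : 'rV[R]_d -> R)
  (rho : 'rV[R]_d -> R) (phi : R -> R) (x0 : 'rV[R]_d) :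
  is_norm N ->
  0 < c1 -> 0 < c2 ->
  (forall x, c1 * enorm x <= N x /\ N x <= c2 * enorm x) ->
  (forall x, 0 < rho x) ->
  (exists C : R, 0 < C /\ forall x, rho x = C * expR (dotp (eta x) mu - A x)) ->
  (forall a b, 0 <= a -> a <= b -> phi a <= phi b) ->
  (forall x, dotp (eta x) mu - A x = - phi (N (x - x0))) ->
  (forall K : set 'rV[R]_d, compact K ->
     exists m M : R, 0 < m /\ forall x, K x -> m <= rho x /\ rho x <= M)
  /\
  (forall x, 4 * (c2 / c1) * enorm x0 < enorm x ->
     eball ((c1 / (2 * c2)) * enorm x) 0 `<=` superlevel rho (rho x)).
Proof.
move=> [Ntri Nsc _] c1p c2p Nb rhop [C [Cp rhoE]] phim phiE.
have en0 x : 0 <= enorm x by rewrite /enorm sqrtr_ge0.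
have N0 x : 0 <= N x.
  by apply: le_trans (proj1 (Nb x)); apply: mulr_ge0; [exact: ltW | exact: en0].
have NN x : N (- x) = N x.
  by rewrite -scaleN1r Nsc normrN normr1 mul1r.
have rE x : rho x = C * expR (- phi (N (x - x0))) by rewrite rhoE phiE.
split.
  move=> K /bnd_cpt [M [M0 HM]].
  pose B := Num.sqrt (\sum_(i < d) M ^+ 2).
  pose T := c2 * B + N (- x0).
  exists (C * expR (- phi T)), (C * expR (- phi 0)); split.
    by rewrite mulr_gt0 // expR_gt0.
  move=> x Kx; rewrite rE; split; rewrite ler_pM2l // ler_expR lerN2; apply: phim => //.
  - apply: le_trans (Ntri _ _) _; rewrite /T lerD2r.
    apply: le_trans (proj2 (Nb x)) _; rewrite ler_pM2l //.
    rewrite /enorm ler_sqrt; last by apply: sumr_ge0 => i _; rewrite sqr_ge0.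
    apply: ler_sum => i _.
    have := HM x Kx i; have := normr_ge0 (x ord0 i).
    rewrite -(real_normK (num_real (x ord0 i))); nra.
move=> x Hx z; rewrite /eball /superlevel /= subr0 => Hz.
rewrite !rE ler_pM2l // ler_expR lerN2; apply: phim => //.
have h1 : N (z - x0) <= c2 * enorm z + c2 * enorm x0.
  apply: le_trans (Ntri _ _) _; rewrite NN.
  by apply: lerD; [exact: (proj2 (Nb z)) | exact: (proj2 (Nb x0))].
have h2 : c1 * enorm x - c2 * enorm x0 <= N (x - x0).
  have := Ntri (x - x0) x0; rewrite subrK => h.
  have := proj1 (Nb x); have := proj2 (Nb x0); lra.
have h3 : c2 * enorm z <= c1 / 2 * enorm x.
  have -> : c1 / 2 * enorm x = c2 * (c1 / (2 * c2) * enorm x).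
    by field; rewrite gt_eqF.
  by rewrite ler_pM2l.
have h4 : 4 * c2 * enorm x0 <= c1 * enorm x.
  move: Hx; rewrite -(ltr_pM2l c1p) => /ltW; apply: le_trans.
  rewrite le_eqVlt; apply/orP; left; apply/eqP; field; rewrite gt_eqF //.
lra.
Qed.
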